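(* Let $U$ be an infinite-dimensional vector space over a (not necessarily commutative) field $K$ and let $R:=\mathrm{End}_K(U)$. Then the projective line $\mathbb{P}(R)$ is connected and its diameter (with respect to the distant relation) is exactly $3$.
   Context: For a ring $R$ with $1$, a pair $(a,b)\in R^2$ is admissible if it is the first row of some invertible $2\times2$ matrix over $R$. The projective line $\mathbb{P}(R)$ is the set of all cyclic submodules $R(a,b)$ of the left $R$-module $R^2$ with $(a,b)$ admissible. Two points $R(a,b)$, $R(c,d)$ are distant iff $\begin{pmatrix}a&b\\c&d\end{pmatrix}$ is invertible. The distant graph has vertex set $\mathbb{P}(R)$ and edges the pairs of distant points; $\mathbb{P}(R)$ is connected if this graph is connected, the distance between two points is the least number of edges of a path joining them, and the diameter is the supremum of distances between points of $\mathbb{P}(R)$. *)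

(* Defs.v *)
From HB Require Import structures.
From mathcomp Require Import all_boot all_order all_algebra.
From Stdlib Require Import ClassicalEpsilon FunctionalExtensionality ProofIrrelevance.
Set Implicit Arguments. Unset Strict Implicit. Unset Printing Implicit Defensive.
Import GRing.Theory.
Local Open Scope ring_scope.

Definition is_division_ring (K : unitRingType) : Prop :=
  forall x : K, x != 0 -> x \is a GRing.unit.

Definition lin_indep (K : pzRingType) (U : lmodType K) (n : nat) (v : 'I_n -> U) :=
  forall c : 'I_n -> K, \sum_(i < n) c i *: v i = 0 -> forall i, c i = 0.

Definition infinite_dim (K : pzRingType) (U : lmodType K) : Prop :=
  forall n : nat, exists v : 'I_n -> U, lin_indep v.

Section Endo.
Variables (K : pzRingType) (U : lmodType K).

Record endo := Endo {
  endo_fun :> U -> U;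
  endo_add : forall x y, endo_fun (x + y) = endo_fun x + endo_fun y;
  endo_scale : forall (a : K) x, endo_fun (a *: x) = a *: endo_fun x }.

Lemma endo_ext (f g : endo) : (forall x, f x = g x) -> f = g.
Proof.
case: f g => f fa fs [g ga gs] /= H.
have E : f = g by apply: functional_extensionality.
subst g; f_equal; apply: proof_irrelevance.
Qed.

Definition endo_eqb (f g : endo) : bool :=
  if excluded_middle_informative (f = g) then true else false.
Lemma endo_eqP : Equality.axiom endo_eqb.
Proof.
move=> f g; rewrite /endo_eqb.
by case: excluded_middle_informative => H; constructor.
Qed.
HB.instance Definition _ := hasDecEq.Build endo endo_eqP.

Definition endo_find (P : pred endo) (n : nat) : option endo :=
  match excluded_middle_informative (exists x, P x) with
  | left h => Some (proj1_sig (constructive_indefinite_description _ h))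
  | right _ => None
  end.
Lemma endo_find_correct P n x : endo_find P n = Some x -> P x.
Proof.
rewrite /endo_find; case: excluded_middle_informative => // h [<-].
exact: proj2_sig (constructive_indefinite_description _ h).
Qed.
Lemma endo_find_complete (P : pred endo) :
  (exists x, P x) -> exists n, endo_find P n.
Proof.
by move=> h; exists 0%N; rewrite /endo_find; case: excluded_middle_informative.
Qed.
Lemma endo_find_ext (P Q : pred endo) : P =1 Q -> endo_find P =1 endo_find Q.
Proof.
by move=> H; have -> : P = Q by apply: functional_extensionality.
Qed.
HB.instance Definition _ :=
  hasChoice.Build endo endo_find_correct endo_find_complete endo_find_ext.

Program Definition endo0 : endo := @Endo (fun _ => 0) _ _.
Next Obligation. by rewrite addr0. Qed.
Next Obligation. by rewrite scaler0. Qed.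
Program Definition endo_opp (f : endo) : endo := @Endo (fun x => - f x) _ _.
Next Obligation. by rewrite endo_add opprD. Qed.
Next Obligation. by rewrite endo_scale scalerN. Qed.
Program Definition endo_addf (f g : endo) : endo := @Endo (fun x => f x + g x) _ _.
Next Obligation. by rewrite !endo_add addrACA. Qed.
Next Obligation. by rewrite !endo_scale scalerDr. Qed.
Program Definition endo1 : endo := @Endo (fun x => x) _ _.
Program Definition endo_mul (f g : endo) : endo := @Endo (fun x => f (g x)) _ _.
Next Obligation. by rewrite !endo_add. Qed.
Next Obligation. by rewrite !endo_scale. Qed.

Lemma endo_addA : associative endo_addf.
Proof. by move=> f g h; apply: endo_ext => x /=; rewrite addrA. Qed.
Lemma endo_addC : commutative endo_addf.
Proof. by move=> f g; apply: endo_ext => x /=; rewrite addrC. Qed.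
Lemma endo_add0 : left_id endo0 endo_addf.
Proof. by move=> f; apply: endo_ext => x /=; rewrite add0r. Qed.
Lemma endo_addN : left_inverse endo0 endo_opp endo_addf.
Proof. by move=> f; apply: endo_ext => x /=; rewrite addNr. Qed.
HB.instance Definition _ :=
  GRing.isZmodule.Build endo endo_addA endo_addC endo_add0 endo_addN.

Lemma endo_mulA : associative endo_mul.
Proof. by move=> f g h; apply: endo_ext. Qed.
Lemma endo_mul1 : left_id endo1 endo_mul.
Proof. by move=> f; apply: endo_ext. Qed.
Lemma endo_mulr1 : right_id endo1 endo_mul.
Proof. by move=> f; apply: endo_ext. Qed.
Lemma endo_mulDl : left_distributive endo_mul endo_addf.
Proof. by move=> f g h; apply: endo_ext. Qed.
Lemma endo_mulDr : right_distributive endo_mul endo_addf.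
Proof. by move=> f g h; apply: endo_ext => x /=; rewrite endo_add. Qed.
HB.instance Definition _ :=
  GRing.Zmodule_isPzRing.Build endo endo_mulA endo_mul1 endo_mulr1 endo_mulDl endo_mulDr.

End Endo.


Section ProjLine.
Variable R : pzRingType.

Definition mx2 (a b c d : R) : 'M[R]_2 :=
  \matrix_(i < 2, j < 2)
    if (i == 0 :> nat) then (if (j == 0 :> nat) then a else b)
    else (if (j == 0 :> nat) then c else d).

Definition invertible2 (M : 'M[R]_2) : Prop :=
  exists N : 'M[R]_2, M *m N = 1%:M /\ N *m M = 1%:M.

Definition admissible (a b : R) : Prop :=
  exists c d : R, invertible2 (mx2 a b c d).

Definition cyc (a b : R) : R * R -> Prop :=
  fun x => exists r : R, x = (r * a, r * b).

Definition point : Type :=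
  { S : R * R -> Prop | exists a b : R, admissible a b /\ S = cyc a b }.

Definition distant (P Q : point) : Prop :=
  exists a b c d : R,
    sval P = cyc a b /\ sval Q = cyc c d /\ invertible2 (mx2 a b c d).

Inductive walk : nat -> point -> point -> Prop :=
  | walk0 P : walk 0 P P
  | walkS n P Q M : walk n P Q -> distant Q M -> walk n.+1 P M.

Definition pdist (P Q : point) (n : nat) : Prop :=
  walk n P Q /\ forall m : nat, (m < n)%N -> ~ walk m P Q.

Definition connected : Prop := forall P Q : point, exists n, walk n P Q.

Definition diameter_eq (d : nat) : Prop :=
  (forall P Q : point, exists n, (n <= d)%N /\ pdist P Q n) /\
  (exists P Q : point, pdist P Q d).

End ProjLine.

(* Main.v *)
Require Import Defs.
From HB Require Import structures.
From mathcomp Require Import all_boot all_order all_algebra.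
From mathcomp Require classical_sets.
From Stdlib Require Import Classical ClassicalEpsilon.
Set Implicit Arguments. Unset Strict Implicit. Unset Printing Implicit Defensive.
Import GRing.Theory.
Local Open Scope ring_scope.


Lemma zmodE3 (V : zmodType) (a b c : V) : a + (b - (a - c)) = b + c.
Proof. by rewrite opprB addrCA (addrC c) addNKr. Qed.

Section Ev.
Variables (K : pzRingType) (U : lmodType K).
Lemma mulE (f g : endo U) x : (f * g) x = f (g x). Proof. by []. Qed.
Lemma addE (f g : endo U) x : (f + g) x = f x + g x. Proof. by []. Qed.
Lemma oppE (f : endo U) x : (- f) x = - f x. Proof. by []. Qed.
Lemma oneE x : (1 : endo U) x = x. Proof. by []. Qed.
Lemma zeroE x : (0 : endo U) x = 0. Proof. by []. Qed.
Lemma subE (f g : endo U) x : (f - g) x = f x - g x. Proof. by []. Qed.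
End Ev.


Section Lin.
Variables (K : unitRingType) (U : lmodType K).
Hypothesis HK : is_division_ring K.

Definition subsp (S : U -> Prop) :=
  S 0 /\ (forall x y, S x -> S y -> S (x + y)) /\ (forall (a : K) x, S x -> S (a *: x)).

Lemma subspN S : subsp S -> forall x, S x -> S (- x).
Proof. move=> [_ [_ HZ]] x Sx; rewrite -scaleN1r; exact: HZ. Qed.
Lemma subspB S : subsp S -> forall x y, S x -> S y -> S (x - y).
Proof. move=> HS x y Sx Sy; case: (HS) => _ [HD _]; apply: HD => //; exact: subspN. Qed.

Lemma invK (k : K) : k != 0 -> k^-1 * k = 1.
Proof. by move=> /HK Hu; rewrite mulVr. Qed.

Lemma complement S : subsp S -> exists C : U -> Prop, subsp C /\
  (forall v, S v -> C v -> v = 0) /\ (forall u, exists s c, S s /\ C c /\ u = s + c).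
Proof.
move=> HS.
pose P := fun C : U -> Prop => (forall x y, C x -> C y -> C (x + y)) /\
  (forall (a : K) x, C x -> C (a *: x)) /\ (forall v, S v -> C v -> v = 0).
have [A [[AD [AZ AS]] Amax]] : exists A, P A /\ forall B, classical_sets.proper A B -> ~ P B.
  apply: classical_sets.Zorn_bigcup => F FP Ftot; split; [|split].
  - move=> x y [X FX Xx] [Y FY Yy].
    case: (Ftot X Y FX FY) => [XY|YX].
    + exists Y => //; case: (FP Y FY) => + _; apply => //; exact: XY.
    + exists X => //; case: (FP X FX) => + _; apply => //; exact: YX.
  - by move=> a x [X FX Xx]; exists X => //; case: (FP X FX) => _ [+ _]; apply.
  - by move=> v Sv [X FX Xx]; case: (FP X FX) => _ [_]; apply.
pose C := fun c => c = 0 \/ A c.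
have CD : forall x y, C x -> C y -> C (x + y).
  by move=> x y [->|Ax] [->|Ay]; rewrite ?addr0 ?add0r; [left|right|right|right; apply: AD].
have CZ : forall (a : K) x, C x -> C (a *: x).
  by move=> a x [->|Ax]; [left; rewrite scaler0|right; apply: AZ].
have HC : subsp C by split; [left|split].
exists C; split => //; split.
  by move=> v Sv [//|Av]; apply: AS.
move=> u; apply: NNPP => Hu.
pose B := fun v => exists a (k : K), C a /\ v = a + k *: u.
apply: (Amax B).
  split.
- move=> x Ax; exists x, 0; split; [by right|by rewrite scale0r addr0].
- move=> Hsub; apply: Hu; exists 0, u; split; first by case: HS.
  split; last by rewrite add0r.
  by right; apply: Hsub; exists 0, 1; split; [left|rewrite scale1r add0r].
rewrite /P; split; [|split].
- move=> x y [a [k [Ca ->]]] [b [l [Cb ->]]]; exists (a + b), (k + l); split; first exact: CD.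
  by rewrite scalerDl addrACA.
- move=> c x [a [k [Ca ->]]]; exists (c *: a), (c * k); split; first exact: CZ.
  by rewrite scalerDr scalerA.
- move=> v Sv [a [k [Ca Ev]]].
  have [k0|kn0] := eqVneq k 0.
    by move: Ev; rewrite k0 scale0r addr0 => Ev; subst v; case: Ca => // Aa; apply: AS.
  exfalso; apply: Hu; exists (k^-1 *: v), (- (k^-1 *: a)); split.
    exact: (proj2 (proj2 HS)).
  split; first by apply: (subspN HC); apply: CZ.
  by rewrite Ev scalerDr scalerA invK // scale1r addrAC subrr add0r.
Qed.

Lemma mkendo (Rl : U -> U -> Prop) :
  (forall v, exists w, Rl v w) ->
  (forall v w w', Rl v w -> Rl v w' -> w = w') ->
  (forall v w v' w', Rl v w -> Rl v' w' -> Rl (v + v') (w + w')) ->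
  (forall (a : K) v w, Rl v w -> Rl (a *: v) (a *: w)) ->
  exists g : endo U, forall v, Rl v (g v).
Proof.
move=> Hex Huniq HD HZ.
pose g v := proj1_sig (constructive_indefinite_description _ (Hex v)).
have gP v : Rl v (g v) by rewrite /g; case: constructive_indefinite_description.
have gD x y : g (x + y) = g x + g y by apply: (Huniq (x + y)); [apply: gP|apply: HD].
have gZ a x : g (a *: x) = a *: g x by apply: (Huniq (a *: x)); [apply: gP|apply: HZ].
by exists (@Endo K U g gD gZ).
Qed.

Lemma projection S : subsp S -> exists P : endo U,
  (forall u, S (P u)) /\ (forall s, S s -> P s = s).
Proof.
move=> HS; have [C [HC [Hdis Hdec]]] := complement HS.
have [P HP] : exists P : endo U, forall u, (fun u s => S s /\ C (u - s)) u (P u).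
  apply: (@mkendo (fun u s => S s /\ C (u - s))).
  - move=> u; have [s [c [Ss [Cc ->]]]] := Hdec u; exists s; split => //.
    by rewrite (addrC s) addrK.
  - move=> v w w' [Sw Cw] [Sw' Cw']; apply/eqP; rewrite -subr_eq0; apply/eqP.
    apply: Hdis; first exact: subspB.
    have -> : w - w' = (v - w') - (v - w) by rewrite opprB (addrC (v - w')) addrA subrK.
    exact: subspB.
  - move=> v w v' w' [Sw Cw] [Sw' Cw']; split; first by case: HS => _ [+ _]; apply.
    have -> : v + v' - (w + w') = (v - w) + (v' - w') by rewrite opprD addrACA.
    by case: HC => _ [+ _]; apply.
  - move=> a v w [Sw Cw]; split; first by case: HS => _ [_]; apply.
    by rewrite -scalerBr; case: HC => _ [_]; apply.
exists P; split; first by move=> u; case: (HP u).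
move=> s Ss; case: (HP s) => SP CP; apply/eqP; rewrite eq_sym -subr_eq0; apply/eqP.
apply: Hdis => //; apply: subspB => //.
Qed.

Definition injf (f : endo U) := forall u, f u = 0 -> u = 0.

Lemma injfP (f : endo U) : injf f -> forall u v, f u = f v -> u = v.
Proof.
move=> Hf u v E; apply/eqP; rewrite -subr_eq0; apply/eqP; apply: Hf.
have -> : f (u - v) = f (u + (-1) *: v) by rewrite scaleN1r.
by rewrite endo_add endo_scale E scaleN1r subrr.
Qed.

Lemma endoN (f : endo U) u : f (- u) = - f u.
Proof. by rewrite -scaleN1r endo_scale scaleN1r. Qed.
Lemma endoB (f : endo U) u v : f (u - v) = f u - f v.
Proof. by rewrite endo_add endoN. Qed.
Lemma endo0v (f : endo U) : f 0 = 0.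
Proof. by have := endo_scale f 0 0; rewrite !scale0r. Qed.

Definition imsp (f : endo U) := fun v => exists u, v = f u.
Lemma imsp_subsp f : subsp (imsp f).
Proof.
split; first by exists 0; rewrite endo0v.
split; first by move=> x y [u ->] [v ->]; exists (u + v); rewrite endo_add.
by move=> a x [u ->]; exists (a *: u); rewrite endo_scale.
Qed.

Lemma left_inv (x : endo U) : injf x -> exists X : endo U, X * x = 1.
Proof.
move=> Hx; have [P [PS Pid]] := projection (imsp_subsp x).
have [X HX] : exists X : endo U, forall v, (fun v u => P v = x u) v (X v).
  apply: (@mkendo (fun v u => P v = x u)).
  - by move=> v; case: (PS v) => u ->; exists u.
  - by move=> v w w' -> /injfP; apply.
  - by move=> v w v' w' E E'; rewrite /= !endo_add E E'.
  - by move=> a v w E; rewrite /= !endo_scale E.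
exists X; apply: endo_ext => u; rewrite mulE oneE; apply: (injfP Hx).
by rewrite -HX Pid //; exists u.
Qed.

Definition uinv (f g : endo U) := f * g = 1 /\ g * f = 1.

Lemma bij_unit (f : endo U) : injf f -> (forall v, exists u, v = f u) ->
  exists g, uinv f g.
Proof.
move=> Hf Hs.
have [g Hg] : exists g : endo U, forall v, (fun v u => v = f u) v (g v).
  apply: (@mkendo (fun v u => v = f u)) => //.
  - by move=> v w w' -> /injfP; apply.
  - by move=> v w v' w' -> ->; rewrite endo_add.
  - by move=> a v w ->; rewrite endo_scale.
exists g; split; apply: endo_ext => u; rewrite mulE oneE //.
by apply: (injfP Hf); rewrite -Hg.
Qed.


Definition graphp (A B : U -> Prop) (G : U * U -> Prop) :=
  [/\ (forall x1 y1 x2 y2, G (x1, y1) -> G (x2, y2) -> G (x1 + x2, y1 + y2)),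
      (forall (k : K) x y, G (x, y) -> G (k *: x, k *: y)),
      (forall x y, G (x, y) -> A x /\ B y),
      (forall y, G (0, y) -> y = 0) &
      (forall x, G (x, 0) -> x = 0)].

Lemma graphp_swap A B G : graphp A B G -> graphp B A (fun p => G (p.2, p.1)).
Proof.
case=> HD HZ HAB H0 H0'; split => /=.
- by move=> x1 y1 x2 y2; apply: HD.
- by move=> k x y; apply: HZ.
- by move=> x y /HAB [].
- exact: H0'.
- exact: H0.
Qed.

Lemma from_graph A B G : subsp A -> subsp B -> graphp A B G ->
  G (0, 0) -> (forall a, A a -> exists b, G (a, b)) ->
  exists j : endo U, (forall a, A a -> B (j a)) /\ (forall a, A a -> j a = 0 -> a = 0).
Proof.
move=> HA HB [HD HZ HAB H0 H0'] G00 Hdom.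
have [P [PS Pid]] := projection HA.
have [j Hj] : exists j : endo U, forall v, (fun v w => G (P v, w)) v (j v).
  apply: (@mkendo (fun v w => G (P v, w))).
  - by move=> v; apply: Hdom.
  - move=> v w w' E E'; apply/eqP; rewrite -subr_eq0; apply/eqP; apply: H0.
    have := HD _ _ _ _ E (HZ (-1) _ _ E'); rewrite !scaleN1r subrr; exact.
  - by move=> v w v' w' E E'; rewrite /= endo_add; apply: HD.
  - by move=> a v w E; rewrite /= endo_scale; apply: HZ.
exists j; split => a Aa; have := Hj a; rewrite /= Pid //.
  by move/HAB => [].
by move=> Ga ja0; apply: H0'; rewrite -ja0.
Qed.

Lemma compare A B : subsp A -> subsp B ->
  (exists j : endo U, (forall a, A a -> B (j a)) /\ (forall a, A a -> j a = 0 -> a = 0)) \/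
  (exists j : endo U, (forall b, B b -> A (j b)) /\ (forall b, B b -> j b = 0 -> b = 0)).
Proof.
move=> HA HB.
have [G [HG Gmax]] : exists G, graphp A B G /\
    forall G', classical_sets.proper G G' -> ~ graphp A B G'.
  apply: classical_sets.Zorn_bigcup => F FP Ftot; split.
  - move=> x1 y1 x2 y2 [X FX Xx] [Y FY Yy].
    case: (Ftot X Y FX FY) => [XY|YX].
    + by exists Y => //; case: (FP Y FY) => + _ _ _ _; apply => //; exact: XY.
    + by exists X => //; case: (FP X FX) => + _ _ _ _; apply => //; exact: YX.
  - by move=> k x y [X FX Xx]; exists X => //; case: (FP X FX) => _ + _ _ _; apply.
  - by move=> x y [X FX Xx]; case: (FP X FX) => _ _ + _ _; apply.
  - by move=> y [X FX Xx]; case: (FP X FX) => _ _ _ + _; apply.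
  - by move=> x [X FX Xx]; case: (FP X FX) => _ _ _ _; apply.
pose G0 := fun p : U * U => p = (0, 0) \/ G p.
case: HG => HD HZ HAB H0 H0'.
have HG0 : graphp A B G0.
  split.
  - move=> x1 y1 x2 y2 [[] -> ->|G1] [[] -> ->|G2]; rewrite ?addr0 ?add0r;
      [by left|by right|by right|right; exact: HD].
  - by move=> k x y [[] -> ->|Gxy]; [left; rewrite !scaler0|right; apply: HZ].
  - move=> x y [[] -> ->|Gxy]; last exact: HAB.
    by split; [case: HA|case: HB].
  - move=> y [E|Gy]; last exact: H0.
    by have := congr1 snd E.
  - move=> x [E|Gx]; last exact: H0'.
    by have := congr1 fst E.
have G000 : G0 (0, 0) by left.
have [Hd|Hd] : (forall a, A a -> exists b, G0 (a, b)) \/ (forall b, B b -> exists a, G0 (a, b)).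
  apply: NNPP => Hn.
  have [a [Aa Ha]] : exists a, A a /\ forall b, ~ G0 (a, b).
    apply: NNPP => Hn1; apply: Hn; left => a1 Aa1; apply: NNPP => Hn2; apply: Hn1.
    by exists a1; split => // b1 Gb; apply: Hn2; exists b1.
  have [b [Bb Hb]] : exists b, B b /\ forall a, ~ G0 (a, b).
    apply: NNPP => Hn1; apply: Hn; right => b1 Bb1; apply: NNPP => Hn2; apply: Hn1.
    by exists b1; split => // a1 Gb; apply: Hn2; exists a1.
  pose G' := fun p : U * U => exists g1 g2 (k : K), G0 (g1, g2) /\
    p = (g1 + k *: a, g2 + k *: b).
  apply: (Gmax G'); first split.
  - move=> [x y] Gxy; exists x, y, 0; split; first by right.
    by rewrite !scale0r !addr0.
  - move=> Hsub; have [g1 [g2 [k [Gg [E1 E2]]]]] : G' (a, b).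
      by exists 0, 0, 1; split; [left|rewrite !scale1r !add0r].
    by apply: (Ha b); right; apply: Hsub; exists 0, 0, 1; split; [left|rewrite !scale1r !add0r].
  case: HG0 => HD0 HZ0 HAB0 H00 H00'.
  split.
  - move=> x1 y1 x2 y2 [g1 [g2 [k [Gg [-> ->]]]]] [h1 [h2 [l [Gh [-> ->]]]]].
    exists (g1 + h1), (g2 + h2), (k + l); split; first exact: HD0.
    by rewrite !scalerDl (addrACA g1) (addrACA g2).
  - move=> c x y [g1 [g2 [k [Gg [-> ->]]]]]; exists (c *: g1), (c *: g2), (c * k).
    by split; [apply: HZ0|rewrite !scalerDr !scalerA].
  - move=> x y [g1 [g2 [k [Gg [-> ->]]]]]; have [Ag Bg] := HAB0 _ _ Gg.
    split; [case: HA => _ [+ HAZ]|case: HB => _ [+ HBZ]]; apply => //; [exact: HAZ|exact: HBZ].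
  - move=> y [g1 [g2 [k [Gg [E1 ->]]]]].
    have [k0|kn0] := eqVneq k 0.
      by move: E1 Gg; rewrite k0 !scale0r !addr0 => <-; apply: H00.
    exfalso; apply: (Ha (- k^-1 *: g2)).
    have -> : a = - k^-1 *: g1.
      have Eg : g1 = - (k *: a) by apply/eqP; rewrite -addr_eq0 E1.
      by rewrite Eg scaleNr scalerN opprK scalerA invK // scale1r.
    exact: HZ0.
  - move=> x [g1 [g2 [k [Gg [-> E2]]]]].
    have [k0|kn0] := eqVneq k 0.
      by move: E2 Gg; rewrite k0 !scale0r !addr0 => <-; apply: H00'.
    exfalso; apply: (Hb (- k^-1 *: g1)).
    have -> : b = - k^-1 *: g2.
      have Eg : g2 = - (k *: b) by apply/eqP; rewrite -addr_eq0 E2.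
      by rewrite Eg scaleNr scalerN opprK scalerA invK // scale1r.
    exact: HZ0.
- by left; apply: (from_graph HA HB HG0).
- right; apply: (from_graph HB HA (graphp_swap HG0)) => //=.
Qed.


Lemma ptw (f g : endo U) : f = g -> forall v, f v = g v.
Proof. by move=> ->. Qed.

Definition inv2 (x y z w p q r t : endo U) :=
  [/\ x * p + y * r = 1, x * q + y * t = 0, z * p + w * r = 0 & z * q + w * t = 1] /\
  [/\ p * x + q * z = 1, p * y + q * w = 0, r * x + t * z = 0 & r * y + t * w = 1].

Definition kersp (f : endo U) := fun v => f v = 0.
Lemma kersp_subsp f : subsp (kersp f).
Proof.
rewrite /kersp; split; first exact: endo0v.
split; first by move=> a b Ha Hb; rewrite endo_add Ha Hb addr0.
by move=> a v Hv; rewrite endo_scale Hv scaler0.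
Qed.

Lemma lemA x y z w p q r t : inv2 x y z w p q r t -> injf x ->
  exists f g, uinv (y - x * f) g.
Proof.
move=> [[E1 E2 E3 E4] [F1 F2 F3 F4]] Hx.
have {E1}E1 v : x (p v) + y (r v) = v by exact: ptw E1 v.
have {E2}E2 v : x (q v) + y (t v) = 0 by exact: ptw E2 v.
have {E4}E4 v : z (q v) + w (t v) = v by exact: ptw E4 v.
have {F3}F3 v : r (x v) + t (z v) = 0 by exact: ptw F3 v.
have {F4}F4 v : r (y v) + t (w v) = v by exact: ptw F4 v.
have [X HX] := left_inv Hx; have {}HX v : X (x v) = v by exact: ptw HX v.
pose Kp := fun v => exists u, y v = x u.
have HKp : subsp Kp.
  split; first by exists 0; rewrite !endo0v.
  split; first by move=> a b [u Hu] [u' Hu']; exists (u + u'); rewrite !endo_add Hu Hu'.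
  by move=> a v [u Hu]; exists (a *: u); rewrite !endo_scale Hu.
have [PK [PKS PKid]] := projection HKp.
pose phi : endo U := w - z * X * y.
pose f : endo U := X * y - phi * PK.
pose g : endo U := r - PK * r + t * X.
pose h := y - x * f.
have hE v : h v = (y v - x (X (y v))) + x (phi (PK v)).
  by rewrite /h /f /= endoB opprB addrA addrAC.
have eK v : Kp v -> y v - x (X (y v)) = 0.
  by case=> u ->; rewrite HX subrr.
have hinj : injf h.
  move=> v; rewrite hE => H0.
  have H1 : phi (PK v) = 0.
    have := congr1 X H0; rewrite endo0v endo_add endoB HX HX subrr add0r; exact.
  move: H0; rewrite H1 endo0v addr0 => /eqP; rewrite subr_eq0 => /eqP Hy.
  have Kv : Kp v by exists (X (y v)).
  move: H1; rewrite PKid // /phi subE mulE mulE => H1.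
  have := F4 v; rewrite {1}Hy.
  have -> : w v = z (X (y v)) by apply/eqP; rewrite -subr_eq0 H1.
  by rewrite F3 => <-.
pose e : endo U := 1 - x * X.
have eE u : e u = u - x (X u) by [].
have ex u : e (x u) = 0 by rewrite eE HX subrr.
have eKp u : Kp u -> e (y u) = 0 by move=> /eK.
have Kt u : Kp (t u).
  exists (- q u); rewrite endoN; apply/eqP; rewrite -addr_eq0 addrC; exact/eqP/E2.
have PKK u : PK (PK u) = PK u by apply: PKid.
have phiE u : phi u = w u - z (X (y u)) by [].
have phit u : phi (t u) = u.
  have Ey : y (t u) = x (- q u).
    rewrite endoN; apply/eqP; rewrite -addr_eq0 addrC; exact/eqP/E2.
  by rewrite phiE Ey HX endoN opprK addrC E4.
have hE' v : h v = e (y v) + x (phi (PK v)) by rewrite hE.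
have gE u : g u = r u - PK (r u) + t (X u) by [].
have hg u : h (g u) = u.
  have E5 : PK (g u) = t (X u).
    by rewrite gE !endo_add endoN PKK addrN add0r (PKid _ (Kt _)).
  rewrite hE' E5 phit.
  have -> : e (y (g u)) = e u.
    rewrite gE !endo_add !endoN (eKp _ (PKS _)) (eKp _ (Kt _)) oppr0 !addr0.
    have -> : y (r u) = u - x (p u) by apply/eqP; rewrite eq_sym subr_eq addrC E1.
    by rewrite endoB ex subr0.
  by rewrite eE subrK.
exists f, g; split; apply: endo_ext => u; rewrite mulE oneE //.
by apply: (injfP hinj); rewrite hg.
Qed.


Lemma dich x y z w p q r t : inv2 x y z w p q r t ->
  (exists c, injf (x - y * c)) \/ (exists g, injf (w + g * y)).
Proof.
move=> [[E1 E2 E3 E4] [F1 F2 F3 F4]].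
have {F1}F1 v : p (x v) + q (z v) = v by exact: ptw F1 v.
have {F2}F2 v : p (y v) + q (w v) = 0 by exact: ptw F2 v.
have {F4}F4 v : r (y v) + t (w v) = v by exact: ptw F4 v.
have [pi [piS piid]] := projection (kersp_subsp y).
have piy v : y (pi v) = 0 by apply: piS.
have pipi v : pi (pi v) = pi v by apply: piid; apply: piS.
pose Cy := kersp pi.
have HCy : subsp Cy := kersp_subsp pi.
pose E := fun u => exists v, x u = y v.
have HE : subsp E.
  split; first by exists 0; rewrite !endo0v.
  split; first by move=> a b [u Hu] [u' Hu']; exists (u + u'); rewrite !endo_add Hu Hu'.
  by move=> a v [u Hu]; exists (a *: u); rewrite !endo_scale Hu.
have [pE [pES pEid]] := projection HE.
have uniqC w1 w2 : y w1 = y w2 -> pi w1 = 0 -> pi w2 = 0 -> w1 = w2.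
  move=> Ey P1 P2; apply/eqP; rewrite -subr_eq0; apply/eqP.
  have <- : pi (w1 - w2) = w1 - w2 by apply: piid; rewrite /kersp endoB Ey subrr.
  by rewrite endoB P1 P2 subrr.
have [H HH] : exists H : endo U, forall v, (fun v w' => x (pE v) = y w' /\ pi w' = 0) v (H v).
  apply: (@mkendo (fun v w' => x (pE v) = y w' /\ pi w' = 0)).
  - move=> v; have [v' Ev'] := pES v; exists (v' - pi v').
    by rewrite endoB piy subr0 endoB pipi subrr.
  - by move=> v w1 w2 [A1 B1] [A2 B2]; apply: uniqC => //; rewrite -A1 -A2.
  - move=> v w1 v' w2 [A1 B1] [A2 B2].
    by rewrite /= !endo_add A1 A2 B1 B2 addr0.
  - by move=> a v w1 [A1 B1]; rewrite /= !endo_scale A1 B1 scaler0.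
have HxE a : E a -> x a = y (H a) by move=> Ea; case: (HH a); rewrite pEid.
have [[iota [iE iinj]]|[nu [nE ninj]]] := compare HE HCy.
- left; exists ((H - iota) * pE) => u.
  rewrite subE mulE mulE subE endoB opprB -(HxE _ (pES u)) addrA => Hu.
  have Ha : E (u - pE u).
    exists (- iota (pE u)); rewrite endoB endoN; apply/eqP; rewrite -addr_eq0.
    by rewrite addrAC; apply/eqP.
  have Eu : u = pE u.
    apply/eqP; rewrite -subr_eq0; apply/eqP.
    by rewrite -(pEid _ Ha) endoB (pEid _ (pES u)) subrr.
  have Eu' : E u by rewrite Eu; apply: pES.
  move: Hu; rewrite -Eu addrAC subrr add0r => Hy.
  have Hi : iota u = 0.
    by rewrite -(piid _ Hy); apply: iE.
  exact: iinj.
- right.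
  pose Ysp := imsp y.
  have [pY [pYS pYid]] := projection (imsp_subsp y).
  have [Yi HYi] : exists Yi : endo U, forall v, (fun v w' => pY v = y w' /\ pi w' = 0) v (Yi v).
    apply: (@mkendo (fun v w' => pY v = y w' /\ pi w' = 0)).
    - move=> v; have [v' Ev'] := pYS v; exists (v' - pi v').
      by rewrite endoB piy subr0 endoB pipi subrr.
    - by move=> v w1 w2 [A1 B1] [A2 B2]; apply: uniqC => //; rewrite -A1 -A2.
    - move=> v w1 v' w2 [A1 B1] [A2 B2].
      by rewrite /= !endo_add A1 A2 B1 B2 addr0.
    - by move=> a v w1 [A1 B1]; rewrite /= !endo_scale A1 B1 scaler0.
  have Yiy v : Yi (y v) = v - pi v.
    case: (HYi (y v)); rewrite pYid; last by exists v.
    move=> A1 B1; apply: uniqC => //.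
      by rewrite endoB piy subr0.
    by rewrite endoB pipi subrr.
  pose th : endo U := z - w * H.
  exists ((th * nu - w) * Yi * pY) => v.
  rewrite addE mulE mulE mulE pYid; last by exists v.
  rewrite Yiy subE [w (v - _)]endoB zmodE3 mulE.
  have Hc : Cy (v - pi v) by rewrite /Cy /kersp endoB pipi subrr.
  move: (nE _ Hc) (ninj _ Hc); set c := v - pi v; set k := pi v; set e := nu c => Ee ninj'.
  have yk : y k = 0 by apply: piy.
  rewrite /th /= => Hth.
  have ze : z e = w (H e) - w k.
    by apply/eqP; rewrite -subr_eq0 opprB addrA addrAC; apply/eqP.
  have qwk : q (w k) = 0 by have := F2 k; rewrite yk endo0v add0r.
  have e0 : e = 0.
    rewrite -(F1 e) ze (HxE _ Ee) endoB addrA (F2 (H e)).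
    by rewrite qwk subr0.
  move: Hth; rewrite e0 !endo0v subrr add0r => wk.
  have k0 : k = 0 by rewrite -(F4 k) yk wk !endo0v addr0.
  have c0 : c = 0 by apply: ninj'.
  by rewrite -(subrK (pi v) v) -/c -/k c0 k0 addr0.
Qed.

End Lin.


Section Mx.
Variable R : pzRingType.

Lemma mx2E (M : 'M[R]_2) : M = mx2 (M 0 0) (M 0 1) (M 1 0) (M 1 1).
Proof.
apply/matrixP => i j; rewrite mxE.
by case: i => [[|[|//]] Hi]; case: j => [[|[|//]] Hj] /=; congr (M _ _); apply: val_inj.
Qed.

Lemma mx2_mul (a b c d a' b' c' d' : R) :
  mx2 a b c d *m mx2 a' b' c' d' =
  mx2 (a * a' + b * c') (a * b' + b * d') (c * a' + d * c') (c * b' + d * d').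
Proof.
apply/matrixP => i j; rewrite !mxE !big_ord_recr big_ord0 !mxE /=.
by case: i => [[|[|//]] Hi]; case: j => [[|[|//]] Hj]; rewrite /= add0r.
Qed.

Lemma mx2_one : (1%:M : 'M[R]_2) = mx2 1 0 0 1.
Proof.
apply/matrixP => i j; rewrite !mxE.
by case: i => [[|[|//]] Hi]; case: j => [[|[|//]] Hj].
Qed.

Lemma mx2_inj (a b c d a' b' c' d' : R) :
  mx2 a b c d = mx2 a' b' c' d' -> [/\ a = a', b = b', c = c' & d = d'].
Proof.
move=> E; have E' i j := congr1 (fun M : 'M[R]_2 => M i j) E.
by move: (E' 0 0) (E' 0 1) (E' 1 0) (E' 1 1); rewrite !mxE /=.
Qed.

Lemma inv2_mul (A B : 'M[R]_2) : invertible2 A -> invertible2 B -> invertible2 (A *m B).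
Proof.
move=> [A' [H1 H2]] [B' [H3 H4]]; exists (B' *m A'); split.
  by rewrite mulmxA -(mulmxA A) H3 mulmx1 H1.
by rewrite mulmxA -(mulmxA B') H2 mulmx1 H4.
Qed.

Lemma inv2_of (A B : 'M[R]_2) : A *m B = 1%:M -> B *m A = 1%:M -> invertible2 A.
Proof. by move=> H1 H2; exists B. Qed.

End Mx.


Section UB.
Variables (K : unitRingType) (U : lmodType K).
Hypothesis HK : is_division_ring K.
Local Notation R := (endo U).

Lemma inv2_of_mx (x y z w : R) : invertible2 (mx2 x y z w) ->
  exists p q r t, inv2 x y z w p q r t.
Proof.
move=> [N [H1 H2]]; exists (N 0 0), (N 0 1), (N 1 0), (N 1 1).
move: H1 H2; rewrite {1 2}(mx2E N) !mx2_mul mx2_one.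
by move=> /mx2_inj [? ? ? ?] /mx2_inj [? ? ? ?].
Qed.

Ltac simp2 := rewrite ?mx2_mul ?mx2_one; congr mx2;
  rewrite ?(mul1r, mulr1, mul0r, mulr0, add0r, addr0, mulrN, mulNr, addrN, addNr, subrr, opprK).

Lemma inv_lower (c : R) : invertible2 (mx2 1 0 c 1).
Proof. by apply: (@inv2_of _ _ (mx2 1 0 (- c) 1)); simp2. Qed.
Lemma inv_upper (c : R) : invertible2 (mx2 1 c 0 1).
Proof. by apply: (@inv2_of _ _ (mx2 1 (- c) 0 1)); simp2. Qed.
Lemma inv_swap : invertible2 (mx2 (0 : R) 1 1 0).
Proof. by apply: (@inv2_of _ _ (mx2 0 1 1 0)); simp2. Qed.
Lemma inv_anti (u f g : R) : uinv u g -> invertible2 (mx2 0 1 u f).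
Proof.
move=> [ug gu]; apply: (@inv2_of _ _ (mx2 (- (g * f)) g 1 0)); simp2; try done.
by rewrite mulrA ug mul1r addNr.
Qed.
Lemma inv_lowu (x u g : R) : uinv u g -> invertible2 (mx2 1 0 x u).
Proof.
move=> [ug gu]; apply: (@inv2_of _ _ (mx2 1 0 (- (g * x)) g)); simp2; try done.
by rewrite mulrA ug mul1r addrN.
Qed.

Lemma core (x y z w : R) : invertible2 (mx2 x y z w) ->
  exists a b c d, [/\ invertible2 (mx2 1 0 a b), invertible2 (mx2 a b c d)
                   & invertible2 (mx2 c d x y)].
Proof.
move=> HA; have [p [q [r [t Hi]]]] := inv2_of_mx HA.
case: (dich HK Hi) => [[c Hc]|[g Hg]].
- pose x' := x - y * c.
  have HA' : invertible2 (mx2 x' y (z - w * c) w).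
    have -> : mx2 x' y (z - w * c) w = mx2 x y z w *m mx2 1 0 (- c) 1 by simp2.
    by apply: inv2_mul => //; apply: inv_lower.
  have [p' [q' [r' [t' Hi']]]] := inv2_of_mx HA'.
  have [f [g Hfg]] := lemA HK Hi' Hc.
  exists c, 1, (1 + f * c), f; split; first exact: inv_lower.
    have -> : mx2 c 1 (1 + f * c) f = mx2 0 1 1 f *m mx2 1 0 c 1 by simp2.
    apply: inv2_mul; last exact: inv_lower.
    by apply: (@inv_anti 1 f 1); split; rewrite mulr1.
  have -> : mx2 (1 + f * c) f x y = (mx2 1 0 x' (y - x' * f) *m mx2 1 f 0 1) *m mx2 1 0 c 1.
    simp2; try done; rewrite (addrC (x' * f)) subrK // /x' subrK //.
  apply: inv2_mul; last exact: inv_lower.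
  apply: inv2_mul; last exact: inv_upper.
  exact: inv_lowu Hfg.
- pose e := z + g * x; pose f' := w + g * y.
  have HB0 : invertible2 (mx2 e f' x y).
    have -> : mx2 e f' x y = mx2 1 g 0 1 *m (mx2 0 1 1 0 *m mx2 x y z w) by simp2.
    apply: inv2_mul; first exact: inv_upper.
    by apply: inv2_mul => //; apply: inv_swap.
  have HB : invertible2 (mx2 f' e y x).
    have -> : mx2 f' e y x = mx2 e f' x y *m mx2 0 1 1 0 by simp2.
    by apply: inv2_mul => //; apply: inv_swap.
  have [p' [q' [r' [t' Hi']]]] := inv2_of_mx HB.
  have [c [g' Hcg]] := lemA HK Hi' Hg.
  exists c, 1, e, f'; split => //; first exact: inv_lower.
  have -> : mx2 c 1 e f' = mx2 0 1 (e - f' * c) f' *m mx2 1 0 c 1.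
    by simp2; rewrite ?subrK.
  apply: inv2_mul; last exact: inv_lower.
  exact: inv_anti Hcg.
Qed.

Lemma UB3 (x1 y1 x2 y2 : R) : admissible x1 y1 -> admissible x2 y2 ->
  exists a b c d, [/\ invertible2 (mx2 x1 y1 a b), invertible2 (mx2 a b c d)
                   & invertible2 (mx2 c d x2 y2)].
Proof.
move=> [z1 [w1 HM1]] [z2 [w2 HM2]].
case: (HM1) => N1 [H1 H2].
have HN1 : invertible2 N1 by apply: (@inv2_of _ _ (mx2 x1 y1 z1 w1)).
pose A := mx2 x2 y2 z2 w2 *m N1.
have HA : invertible2 A by apply: inv2_mul.
have AM : A *m mx2 x1 y1 z1 w1 = mx2 x2 y2 z2 w2 by rewrite -mulmxA H2 mulmx1.
rewrite (mx2E A) in HA AM.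
move: AM; rewrite mx2_mul => /mx2_inj [Ex2 Ey2 _ _].
have [a [b [c [d [Ha Hb Hc]]]]] := core HA.
exists (a * x1 + b * z1), (a * y1 + b * w1), (c * x1 + d * z1), (c * y1 + d * w1); split.
- have -> : mx2 x1 y1 (a * x1 + b * z1) (a * y1 + b * w1) =
            mx2 1 0 a b *m mx2 x1 y1 z1 w1 by simp2.
  exact: inv2_mul.
- by rewrite -mx2_mul; apply: inv2_mul.
- by rewrite -Ex2 -Ey2 -mx2_mul; apply: inv2_mul.
Qed.

End UB.


Section Dep.
Variables (K : unitRingType).
Hypothesis HK : is_division_ring K.

Lemma dep n (C : 'I_n.+1 -> 'I_n -> K) :
  exists a : 'I_n.+1 -> K, (exists i, a i != 0) /\ forall j, \sum_i a i * C i j = 0.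
Proof.
elim: n C => [|n IH] C.
  exists (fun _ => 1); split; [by exists ord0; rewrite oner_neq0|by case].
pose l : 'I_n.+1 := ord_max.
have [k Hk] : exists k : 'I_n.+2, C k l != 0 \/ forall x, C x l = 0.
  case: (classic (exists k, C k l != 0)) => [[k Hk]|Hn]; first by exists k; left.
  exists ord0; right => x; apply/eqP; apply: NNPP => Hx; apply: Hn; exists x; exact/negP.
pose c := C k l.
pose D (i : 'I_n.+1) (j : 'I_n) :=
  C (lift k i) (lift l j) - C (lift k i) l * c^-1 * C k (lift l j).
have [a' [[i0 Hi0] Ha']] := IH D.
pose beta := - (\sum_i a' i * C (lift k i) l) * c^-1.
pose a (x : 'I_n.+2) := if unlift k x is Some i then a' i else beta.
have ak : a k = beta by rewrite /a unlift_none.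
have al i : a (lift k i) = a' i by rewrite /a liftK.
exists a; split; first by exists (lift k i0); rewrite al.
move=> j'; rewrite (bigD1_ord k) //= ak.
under eq_bigr => i _ do rewrite al.
case: (unliftP l j') => [j ->|->].
- have E i : C (lift k i) (lift l j) = D i j + C (lift k i) l * c^-1 * C k (lift l j).
    by rewrite /D subrK.
  under eq_bigr => i _ do rewrite E mulrDr.
  rewrite big_split /= Ha' add0r.
  have -> : \sum_i a' i * (C (lift k i) l * c^-1 * C k (lift l j)) =
            (\sum_i a' i * C (lift k i) l) * c^-1 * C k (lift l j).
    by rewrite !mulr_suml; apply: eq_bigr => i _; rewrite !mulrA.
  by rewrite /beta !mulNr addNr.
- case: Hk => [Hc|H0].
    by rewrite /beta !mulNr -mulrA invK // mulr1 addNr.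
  rewrite H0 mulr0 add0r big1 // => i _; by rewrite H0 mulr0.
Qed.

End Dep.


Section Seq.
Variables (K : unitRingType) (U : lmodType K).
Hypothesis HK : is_division_ring K.
Hypothesis HU : infinite_dim U.

Definition spanl (l : seq U) x := exists c : nat -> K, x = \sum_(i < size l) c i *: nth 0 l i.

Lemma nfg l : exists x, ~ spanl l x.
Proof.
apply: NNPP => Hn.
have H x : spanl l x by apply: NNPP => Hx; apply: Hn; exists x.
pose n := size l.
have [w Hw] := HU n.+1.
pose cf i := proj1_sig (constructive_indefinite_description _ (H (w i))).
have cfP i : w i = \sum_(j < n) cf i j *: nth 0 l j.
  by rewrite /cf; case: constructive_indefinite_description.
have [a [[i0 Hi0] Ha]] := dep HK (fun (i : 'I_n.+1) (j : 'I_n) => cf i j).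
suff : \sum_i a i *: w i = 0 by move/Hw/(_ i0)/eqP; rewrite (negbTE Hi0).
under eq_bigr => i _ do rewrite cfP scaler_sumr.
rewrite exchange_big /=; apply: big1 => j _.
under eq_bigr => i _ do rewrite scalerA.
by rewrite -scaler_suml Ha scale0r.
Qed.


Definition nx (l : seq U) : U := proj1_sig (constructive_indefinite_description _ (nfg l)).
Lemma nxP l : ~ spanl l (nx l).
Proof. by rewrite /nx; case: constructive_indefinite_description. Qed.

Fixpoint LL (n : nat) : seq U :=
  if n is n'.+1 then rcons (LL n') (nx (LL n')) else [::].
Definition vv n := nx (LL n).

Lemma size_LL n : size (LL n) = n.
Proof. by elim: n => //= n IH; rewrite size_rcons IH. Qed.

Lemma nth_LL n i : (i < n)%N -> nth 0 (LL n) i = vv i.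
Proof.
elim: n => // n IH; rewrite ltnS leq_eqVlt => /orP[/eqP ->|Hi] /=.
  by rewrite nth_rcons size_LL ltnn eqxx.
by rewrite nth_rcons size_LL Hi IH.
Qed.

Lemma indep n (c : nat -> K) : \sum_(i < n) c i *: vv i = 0 -> forall i, (i < n)%N -> c i = 0.
Proof.
elim: n => // n IH; rewrite big_ord_recr /=.
have [cn0|cnn0] := eqVneq (c n) 0.
  rewrite cn0 scale0r addr0 => /IH H i; rewrite ltnS leq_eqVlt => /orP[/eqP ->//|]; exact: H.
move=> Hs; exfalso; apply: (nxP (l := LL n)).
exists (fun i => - (c n)^-1 * c i); rewrite size_LL.
have -> : \sum_(i < n) - (c n)^-1 * c i *: nth 0 (LL n) i =
          - (c n)^-1 *: \sum_(i < n) c i *: vv i.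
  by rewrite scaler_sumr; apply: eq_bigr => i _; rewrite nth_LL // scalerA.
have -> : \sum_(i < n) c i *: vv i = - (c n *: vv n).
  by apply/eqP; rewrite -addr_eq0 Hs.
by rewrite scalerN scaleNr opprK scalerA invK // scale1r.
Qed.


Definition pad n (c : nat -> K) i := if (i < n)%N then c i else 0.

Lemma sum_pad (f : nat -> U) n c N : (n <= N)%N ->
  \sum_(i < N) pad n c i *: f i = \sum_(i < n) c i *: f i.
Proof.
move=> HN; rewrite (big_ord_widen N (fun i => c i *: f i) HN) [RHS]big_mkcond.
by apply: eq_bigr => i _; rewrite /pad; case: ifP => _; rewrite ?scale0r.
Qed.

Lemma sum_diff (f : nat -> U) (a b : nat -> K) N :
  \sum_(i < N) a i *: f i - \sum_(i < N) b i *: f i = \sum_(i < N) (a i - b i) *: f i.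
Proof. by rewrite -sumrB; apply: eq_bigr => i _; rewrite scalerBl. Qed.

Definition Tsp x := exists n (c : nat -> K), x = \sum_(i < n) c i *: vv i.
Definition Rsh u w := exists n (c : nat -> K), u = \sum_(i < n) c i *: vv i /\ w = \sum_(i < n) c i *: vv i.+1.

Lemma Rsh_uniq u w w' : Rsh u w -> Rsh u w' -> w = w'.
Proof.
move=> [n [c [E1 E2]]] [m [d [E3 E4]]].
have Hn : (n <= n + m)%N by rewrite leq_addr.
have Hm : (m <= n + m)%N by rewrite leq_addl.
rewrite -(sum_pad vv c Hn) in E1; rewrite -(sum_pad vv d Hm) in E3.
rewrite -(sum_pad (fun i => vv i.+1) c Hn) in E2.
rewrite -(sum_pad (fun i => vv i.+1) d Hm) in E4.
have H0 := indep (n := n + m) (c := fun i => pad n c i - pad m d i).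
have Z : forall i : 'I_(n + m), pad n c i - pad m d i = 0.
  move=> i; apply: H0 => //; by rewrite -(sum_diff vv (pad n c) (pad m d)) -E1 -E3 subrr.
apply/eqP; rewrite -subr_eq0 E2 E4 (sum_diff (fun i => vv i.+1)); apply/eqP.
by apply: big1 => i _; rewrite Z scale0r.
Qed.

Lemma Rsh_add u w u' w' : Rsh u w -> Rsh u' w' -> Rsh (u + u') (w + w').
Proof.
move=> [n [c [E1 E2]]] [m [d [E3 E4]]].
have Hn : (n <= n + m)%N by rewrite leq_addr.
have Hm : (m <= n + m)%N by rewrite leq_addl.
exists (n + m)%N, (fun i => pad n c i + pad m d i).
rewrite E1 E2 E3 E4 -(sum_pad vv c Hn) -(sum_pad vv d Hm).
rewrite -(sum_pad (fun i => vv i.+1) c Hn) -(sum_pad (fun i => vv i.+1) d Hm).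
by rewrite -!big_split; split; apply: eq_bigr => i _; rewrite scalerDl.
Qed.

Lemma Rsh_scale (a : K) u w : Rsh u w -> Rsh (a *: u) (a *: w).
Proof.
move=> [n [c [E1 E2]]]; exists n, (fun i => a * c i); rewrite E1 E2 !scaler_sumr.
by split; apply: eq_bigr => i _; rewrite scalerA.
Qed.

Lemma Tsp_Rsh x : Tsp x <-> exists w, Rsh x w.
Proof.
split; first by move=> [n [c E]]; exists (\sum_(i < n) c i *: vv i.+1), n, c.
by move=> [w [n [c [E _]]]]; exists n, c.
Qed.

Lemma Tsp_subsp : subsp Tsp.
Proof.
split; first by exists 0%N, (fun _ => 0); rewrite big_ord0.
split.
  move=> x y /Tsp_Rsh [w Hw] /Tsp_Rsh [w' Hw']; apply/Tsp_Rsh.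
  by exists (w + w'); apply: Rsh_add.
by move=> a x /Tsp_Rsh [w Hw]; apply/Tsp_Rsh; exists (a *: w); apply: Rsh_scale.
Qed.


Definition sh (a : K) (c : nat -> K) i := if i is i'.+1 then c i' else a.

Lemma shiftE n a c : \sum_(i < n.+1) sh a c i *: vv i = a *: vv 0 + \sum_(i < n) c i *: vv i.+1.
Proof. by rewrite big_ord_recl. Qed.

Lemma vv0_neq0 : vv 0 != 0.
Proof.
apply/eqP => H; apply: (nxP (l := [::])); exists (fun _ => 0).
by rewrite big_ord0; exact: H.
Qed.

Lemma vv0_T : Tsp (vv 0).
Proof. by exists 1%N, (fun _ => 1); rewrite big_ord1 scale1r. Qed.

Lemma not_dfin : exists a s : endo U, a * s = 1 /\ s * a <> 1.
Proof.
have [P [PS Pid]] := projection HK Tsp_subsp.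
have [sg Hsg] : exists sg : endo U, forall u, (fun u w => Rsh (P u) w) u (sg u).
  apply: (@mkendo _ _ (fun u w => Rsh (P u) w)).
  - by move=> u; apply/Tsp_Rsh.
  - by move=> u w w'; apply: Rsh_uniq.
  - by move=> u w u' w' H1 H2; rewrite /= endo_add; apply: Rsh_add.
  - by move=> a u w H; rewrite /= endo_scale; apply: Rsh_scale.
have sgT u : Tsp (sg u).
  have [n [c [_ ->]]] := Hsg u; exists n.+1, (sh 0 c).
  by rewrite shiftE scale0r add0r.
have sginj u : Tsp u -> sg u = 0 -> u = 0.
  move=> Tu; have [n [c [E1 E2]]] := Hsg u; rewrite (Pid _ Tu) in E1.
  move=> H0; have H1 : \sum_(i < n.+1) sh 0 c i *: vv i = 0.
    by rewrite shiftE scale0r add0r -E2.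
  rewrite E1; apply: big1 => i _.
  by move: (indep H1 (i := i.+1)); rewrite /= ltnS ltn_ord => /(_ isT) ->; rewrite scale0r.
have sgv0 u : sg u <> vv 0.
  have [n [c [_ E2]]] := Hsg u => H.
  have H1 : \sum_(i < n.+1) sh (-1) c i *: vv i = 0.
    by rewrite shiftE -E2 H scaleN1r addNr.
  have := indep H1 (i := 0%N) (ltn0Sn _) => /= /eqP; rewrite oppr_eq0 oner_eq0 //.
pose s : endo U := sg + (1 - P).
have sE u : s u = sg u + (u - P u) by [].
have PB u : P (u - P u) = 0 by rewrite endoB (Pid _ (PS u)) subrr.
have sinj : injf s.
  move=> u; rewrite sE => H.
  have Hm : u - P u = - sg u by apply/eqP; rewrite -addr_eq0 addrC H.
  have Tm : Tsp (u - P u) by rewrite Hm; apply: subspN (Tsp_subsp) _ _.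
  have Eu : u = P u by apply/eqP; rewrite -subr_eq0 -(Pid _ Tm) PB.
  apply: sginj; first by rewrite Eu.
  by move: H; rewrite -Eu subrr addr0.
have sv0 u : s u <> vv 0.
  rewrite sE => H.
  have Hm : u - P u = vv 0 - sg u by apply/eqP; rewrite eq_sym subr_eq addrC H.
  have Tm : Tsp (u - P u) by rewrite Hm; apply: subspB (Tsp_subsp) _ _ vv0_T _.
  have Eu : u = P u by apply/eqP; rewrite -subr_eq0 -(Pid _ Tm) PB.
  by apply: (sgv0 u); move: H; rewrite -Eu subrr addr0.
have [a Ha] := left_inv HK sinj.
exists a, s; split => // Hsa; apply: (sv0 (a (vv 0))).
by rewrite -mulE Hsa oneE.
Qed.

Lemma endo_one_neq0 : (1 : endo U) <> 0.
Proof. by move=> H; move/eqP: vv0_neq0; apply; rewrite -[vv 0]oneE H zeroE. Qed.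

End Seq.


Lemma exmin (Pr : nat -> Prop) n : Pr n ->
  exists m, [/\ Pr m, (m <= n)%N & forall k, (k < m)%N -> ~ Pr k].
Proof.
elim/ltn_ind: n => n IH Hn.
case: (classic (exists k, (k < n)%N /\ Pr k)) => [[k [Hk Pk]]|Hno].
  have [m [Pm Hm Hmin]] := IH k Hk Pk; exists m; split => //.
  exact: leq_trans Hm (ltnW Hk).
exists n; split => // k Hk Pk; apply: Hno; exists k; split => //.
Qed.

Section Main.
Variables (K : unitRingType) (U : lmodType K).
Hypothesis HK : is_division_ring K.
Hypothesis HU : infinite_dim U.
Local Notation R := (endo U).

Definition mkpt (a b : R) (H : admissible a b) : point R :=
  exist _ (cyc a b) (ex_intro _ a (ex_intro _ b (conj H erefl))).

Lemma adm_snd (a b c d : R) : invertible2 (mx2 a b c d) -> admissible c d.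
Proof.
move=> H; exists a, b.
have -> : mx2 c d a b = mx2 0 1 1 0 *m mx2 a b c d.
  by rewrite mx2_mul !mul0r !mul1r !add0r !addr0.
by apply: inv2_mul => //; apply: inv_swap.
Qed.

Lemma walk0E (P Q : point R) : walk 0 P Q -> P = Q.
Proof. by move=> H; inversion H. Qed.

Lemma walkSE n (P Q : point R) : walk n.+1 P Q -> exists M, walk n P M /\ distant M Q.
Proof. by move=> H; inversion H; exists Q0. Qed.

Lemma walk3 (P Q : point R) : walk 3 P Q.
Proof.
case: P => S [a1 [b1 [H1 E1]]]; case: Q => T [a2 [b2 [H2 E2]]].
have [a [b [c [d [Ha Hb Hc]]]]] := UB3 HK H1 H2.
pose X := mkpt (adm_snd Ha); pose Y := mkpt (adm_snd Hb).
apply: (@walkS _ 2 _ Y); last by exists c, d, a2, b2.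
apply: (@walkS _ 1 _ X); last by exists a, b, c, d.
apply: (@walkS _ 0 _ (exist _ S (ex_intro _ a1 (ex_intro _ b1 (conj H1 E1))))).
  exact: walk0.
by exists a1, b1, a, b.
Qed.


Lemma cyc_in (x y : R) : cyc x y (x, y).
Proof. by exists 1; rewrite !mul1r. Qed.

Lemma cyc_snd0 (x y u : R) : cyc x y = cyc u 0 -> y = 0.
Proof. by move=> E; have := cyc_in x y; rewrite E => -[r [_ ->]]; rewrite mulr0. Qed.

Lemma cyc_fst (x y u : R) : cyc x y = cyc u 0 -> exists r, u = r * x.
Proof. by move=> E; have := cyc_in u 0; rewrite -E => -[r [-> _]]; exists r. Qed.

Lemma cyc_eq (x y x' y' : R) : cyc x y = cyc x' y' -> exists r, x' = r * x /\ y' = r * y.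
Proof. by move=> E; have := cyc_in x' y'; rewrite -E => -[r [-> ->]]; exists r. Qed.

Lemma adm10 : admissible (1 : R) 0.
Proof. by exists 0, 1; exists 1%:M; rewrite -mx2_one mulmx1. Qed.

Lemma lower (a s : R) : a * s = 1 -> s * a <> 1 ->
  exists P Q : point R, pdist P Q 3.
Proof.
move=> as1 sa1.
have Hadm : admissible a 0.
  have ap : a * (1 - s * a) = 0 by rewrite mulrBr mulr1 mulrA as1 mul1r subrr.
  have ps : (1 - s * a) * s = 0 by rewrite mulrBl mul1r -mulrA as1 mulr1 subrr.
  have pp : (1 - s * a) * (1 - s * a) = 1 - s * a.
    by rewrite mulrBr mulr1 mulrA ps mul0r subr0.
  exists (1 - s * a), s; apply: (@inv2_of _ _ (mx2 s (1 - s * a) 0 a)).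
    rewrite mx2_mul mx2_one; congr mx2;
      by rewrite ?mul0r ?mulr0 ?addr0 ?add0r ?as1 ?ap ?ps ?pp ?subrK.
  rewrite mx2_mul mx2_one; congr mx2;
    by rewrite ?mul0r ?mulr0 ?addr0 ?add0r ?as1 ?ap ?ps ?pp ?(addrC (s * a)) ?subrK.
pose P1 := mkpt adm10; pose P2 := mkpt Hadm.
exists P1, P2; split; first exact: walk3.
have noleft r : r * a = 1 -> False.
  move=> ra; apply: sa1.
  have -> : s = r by rewrite -[r]mulr1 -as1 mulrA ra mul1r.
  exact: ra.
have one0 := endo_one_neq0 HK HU.
move=> [|[|[|//]]] _ W.
- have /(congr1 sval) /= Ec := walk0E W.
  by have [r [E _]] := cyc_eq (esym Ec); apply: (noleft r); rewrite -E.
- have [M [/walk0E <- [x [y [x' [y' [E1 [E2 Hi]]]]]]]] := walkSE W.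
  have y0 := cyc_snd0 (esym E1); have y'0 := cyc_snd0 (esym E2).
  rewrite y0 y'0 in Hi.
  have [p [q [r [t [_ [_ _ _ F4]]]]]] := inv2_of_mx Hi.
  by apply: one0; rewrite -F4 !mulr0 addr0.
- have [M2 [W1 [c' [d' [a2 [b2 [E3 [E4 Hi2]]]]]]]] := walkSE W.
  have [M1 [/walk0E <- [a1 [b1 [c [d [E1 [E2 Hi1]]]]]]]] := walkSE W1.
  have b10 := cyc_snd0 (esym E1); have [r0 Er0] := cyc_fst (esym E1).
  have b20 := cyc_snd0 (esym E4); have [m [Em _]] := cyc_eq E4.
  have [u [Ec' Ed']] := cyc_eq (etrans (esym E2) E3).
  rewrite b10 in Hi1; rewrite b20 in Hi2.
  have [p [q [r [t [[G1 G2 _ G4] [_ _ _ G8]]]]]] := inv2_of_mx Hi1.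
  have [p' [q' [r' [t' [_ [H5 H6 _ _]]]]]] := inv2_of_mx Hi2.
  rewrite mul0r addr0 in G1; rewrite mul0r addr0 in G2.
  rewrite mulr0 add0r in G8; rewrite mulr0 addr0 in H6.
  have q0 : q = 0 by rewrite -[q]mul1r Er0 -mulrA G2 mulr0.
  rewrite q0 mulr0 add0r in G4.
  have pu : p' * u = 0 by rewrite -[p' * u]mulr1 -G4 mulrA -(mulrA p') -Ed' H6 mul0r.
  rewrite Ec' mulrA pu mul0r add0r Em mulrA in H5.
  exact: (noleft _ H5).
Qed.

End Main.

Unset Implicit Arguments.
Local Close Scope ring_scope.

Theorem mainTheorem8 (K : unitRingType) (U : lmodType K) :
  is_division_ring K -> infinite_dim U ->
  connected (endo U) /\ diameter_eq (endo U) 3.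
Proof.
move=> HK HU; split; first by move=> P Q; exists 3%N; apply: walk3.
split.
- move=> P Q; have [m [Wm Hm Hmin]] := @exmin (fun n => walk n P Q) 3 (walk3 HK P Q).
  by exists m; split => //; split.
- have [a [s [as1 sa1]]] := not_dfin HK HU.
  by apply: (@lower K U HK HU a s)...
Qed.
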